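(* Let $K$ be a skew field that is finite-dimensional over its center, and take $\sigma=\mathrm{id}$, $\delta=0$, so $K[T;\sigma,\delta]=K[T]$ with $T$ central. Then a skew rational function in $K(T)$ is defined at $a\in K$ if and only if the denominator $P(T)$ of its minimal representation satisfies $P(c)\neq0$ for every $c\in\{bab^{-1}:b\in K^*\}$.
   Context: Here $K^*=K\setminus\{0\}$ acts on $K$ by conjugation ${}^{b}a=bab^{-1}$, and $\Delta(a)=\{bab^{-1}:b\in K^*\}$. For $P\in K[T]$ and $a\in K$, $P(a)$ is the unique element of $K$ with $P(T)-P(a)\in K[T](T-a)$ (i.e. $P(a)=\sum p_ia^i$ for $P=\sum p_iT^i$). For a set $Z$ with a $K^*$-action, the skew product of functions $Z\to K$ is $(f\diamond g)(z)=f({}^{g(z)}z)g(z)$ if $g(z)\neq0$, $0$ otherwise; $f$ is skew invertible if some $g$ satisfies $f\diamond g=g\diamond f=1$. $K(T)$ is the division ring of left fractions of $K[T]$; each $f$ has a unique minimal representation $P(T)^{-1}Q(T)$ with $P$ monic of least degree; $f$ is defined at $a$ if the function $\Delta(a)\to K$, $c\mapsto P(c)$, is skew invertible. *)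

(* Defs.v *)
From HB Require Import structures.
From mathcomp Require Import all_boot all_order all_algebra.
Set Implicit Arguments. Unset Strict Implicit. Unset Printing Implicit Defensive.
Import GRing.Theory.
Local Open Scope ring_scope.

Definition skew_field (K : unitRingType) : Prop :=
  forall x : K, x != 0 -> x \is a GRing.unit.

Definition central (K : unitRingType) (z : K) : Prop :=
  forall x : K, z * x = x * z.

Definition findim_over_center (K : unitRingType) : Prop :=
  exists (n : nat) (e : 'I_n -> K),
    forall x : K, exists z : 'I_n -> K,
      (forall i, central (z i)) /\ x = \sum_(i < n) z i * e i.

Definition conj_class (K : unitRingType) (a c : K) : Prop :=
  exists b : K, b != 0 /\ c = b * a * b^-1.

(* skew product of functions Z -> K, with Z acted on by conjugation;
   (f <> g)(z) = f(g(z) z g(z)^-1) g(z) if g(z) <> 0, and 0 otherwise. *)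
Definition skew_prod (K : unitRingType) (f g : K -> K) (z : K) : K :=
  if g z != 0 then f (g z * z * (g z)^-1) * g z else 0.

Definition skew_invertible_on (K : unitRingType) (a : K) (f : K -> K) : Prop :=
  exists g : K -> K, forall z : K, conj_class a z ->
    skew_prod f g z = 1 /\ skew_prod g f z = 1.

(* Equality of left fractions P^-1 Q = P'^-1 Q' in K(T) (Ore localization of
   K[T], T central): a common left multiple U P = U' P' <> 0 with U Q = U' Q'. *)
Definition lfrac_eq (K : unitRingType) (P Q P' Q' : {poly K}) : Prop :=
  exists U U' : {poly K}, U * P = U' * P' /\ U * P != 0 /\ U * Q = U' * Q'.

Definition minimal_rep (K : unitRingType) (P Q : {poly K}) : Prop :=
  P \is monic /\
  forall P' Q' : {poly K}, P' \is monic -> lfrac_eq P Q P' Q' ->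
    (size P <= size P')%N.

(* f = P^-1 Q (minimal) is defined at a iff c |-> P(c) on Delta(a) is skew
   invertible. P(c) = sum p_i c^i is MathComp's horner evaluation P.[c]. *)
Definition defined_at (K : unitRingType) (P : {poly K}) (a : K) : Prop :=
  skew_invertible_on a (fun c => P.[c]).

(* Main.v *)
Require Import Defs.
From HB Require Import structures.
From mathcomp Require Import all_boot all_order all_algebra.
From mathcomp Require Import boolp.
From Stdlib Require Import Classical ClassicalEpsilon.
Import GRing.Theory.
Local Open Scope ring_scope.

Section Cen.
Variable K : unitRingType.
Definition cpred : pred K := fun x => `[< central x >].
Lemma cpred_subring : subring_closed cpred.
Proof.
split.
- by apply/asboolP => x; rewrite mul1r mulr1.
- move=> x y /asboolP Hx /asboolP Hy; apply/asboolP => z.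
  by rewrite mulrBl mulrBr Hx Hy.
- move=> x y /asboolP Hx /asboolP Hy; apply/asboolP => z.
  by rewrite -mulrA Hy mulrA Hx mulrA.
Qed.
HB.instance Definition _ := GRing.isSubringClosed.Build K cpred cpred_subring.
Record cen := Cen { cval :> K; cvalP : cpred cval }.

HB.instance Definition _ := [isSub for cval].
HB.instance Definition _ := [Choice of cen by <:].
HB.instance Definition _ := [SubChoice_isSubNzRing of cen by <:].
Lemma cen_mulC : commutative (@GRing.mul cen).
Proof. move=> x y; apply: val_inj => /=. by move/asboolP: (cvalP x) => ->. Qed.
HB.instance Definition _ := GRing.PzRing_hasCommutativeMul.Build cen cen_mulC.
Lemma cvalM (x y : cen) : cval (x * y) = cval x * cval y. Proof. by []. Qed.
Lemma cvalD (x y : cen) : cval (x + y) = cval x + cval y. Proof. by []. Qed.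
Lemma cval1 : cval (1 : cen) = 1. Proof. by []. Qed.
Lemma cval0 : cval (0 : cen) = 0. Proof. by []. Qed.
Lemma cval_central (x : cen) : central (cval x).
Proof. exact/asboolP/(cvalP x). Qed.
End Cen.
Arguments cval {K}. Arguments Cen {K}.

Section Op.
Variable K : unitRingType.
Hypothesis HK : skew_field K.
Variable L : K -> K.
Hypothesis LD : forall x y, L (x + y) = L x + L y.
Hypothesis LZ : forall z x, central z -> L (z * x) = z * L x.

Lemma L0 : L 0 = 0.
Proof. by apply: (addrI (L 0)); rewrite -LD !addr0. Qed.

Lemma LN x : L (- x) = - L x.
Proof. by apply/eqP; rewrite -addr_eq0 -LD addNr L0. Qed.

Lemma Lsum (I : Type) (r : seq I) (Pr : pred I) (F : I -> K) :
  L (\sum_(i <- r | Pr i) F i) = \sum_(i <- r | Pr i) L (F i).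
Proof. exact: (big_morph L LD L0). Qed.

Lemma central_inv (z : K) : central z -> z != 0 -> central (z^-1).
Proof.
move=> Hz nz x; have U := HK _ nz.
apply: (mulrI U) => /=; rewrite mulrA; by rewrite mulrA mulrV // mul1r Hz -mulrA mulrV // mulr1.
Qed.

Hypothesis Linj : forall x, L x = 0 -> x = 0.

Lemma surj_of_rel N (c : nat -> K) : (forall k, @central K (c k)) ->
  (exists k, (k < N)%N /\ c k != 0) ->
  (forall x, \sum_(k < N) c k * iter k L x = 0) -> forall y, exists x, L x = y.
Proof.
elim: N c => [|N IH] c Hc [k [Hk Hck]] Hrel y; first by [].
have split x : \sum_(k < N.+1) c k * iter k L x =
   c 0%N * x + L (\sum_(k < N) c k.+1 * iter k L x).
  rewrite big_ord_recl /= Lsum; congr (_ + _); apply: eq_bigr => i _.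
  by rewrite LZ.
have [c0|nc0] := eqVneq (c 0%N) 0.
  have H' x : \sum_(k < N) c k.+1 * iter k L x = 0.
    by apply: Linj; move: (Hrel x); rewrite split c0 mul0r add0r.
  apply: (IH (fun k => c k.+1)) => //.
  by case: k Hk Hck => [|k] Hk Hck; [rewrite c0 eqxx in Hck | exists k].
exists ((c 0%N)^-1 * - \sum_(k < N) c k.+1 * iter k L y).
rewrite LZ; last exact: central_inv.
rewrite LN; move: (Hrel y); rewrite split => /eqP; rewrite addr_eq0 => /eqP <-.
by rewrite mulKr // HK.
Qed.
End Op.

Section CH.
Variable K : unitRingType.
Variable n : nat.
Variable e : 'I_n.+1 -> K.
Hypothesis Hspan : forall x : K, exists z : 'I_n.+1 -> K,
      (forall i, central (z i)) /\ x = \sum_(i < n.+1) z i * e i.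
Variable L : K -> K.
Hypothesis LD : forall x y, L (x + y) = L x + L y.
Hypothesis LZ : forall z x, @central K z -> L (z * x) = z * L x.

Definition S (v : 'rV[cen K]_n.+1) : K := \sum_i cval (v 0 i) * e i.

Lemma coord_ex x : exists v, S v = x.
Proof.
have [z [Hz ->]] := Hspan x.
exists (\row_i Cen (z i) (introT (asboolP _) (Hz i))).
by apply: eq_bigr => i _; rewrite mxE.
Qed.

Definition coord x := proj1_sig (constructive_indefinite_description _ (coord_ex x)).
Lemma coordK x : S (coord x) = x.
Proof. exact: (proj2_sig (constructive_indefinite_description _ (coord_ex x))). Qed.

Definition A : 'M[cen K]_n.+1 := \matrix_(i, j) coord (L (e i)) 0 j.

Lemma cval_sum (I : Type) (r : seq I) (Pr : pred I) (F : I -> cen K) :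
  cval (\sum_(i <- r | Pr i) F i) = \sum_(i <- r | Pr i) cval (F i).
Proof. exact: (big_morph (@cval K) (@cvalD K) (@cval0 K)). Qed.

Lemma SD v w : S (v + w) = S v + S w.
Proof. by rewrite /S -big_split; apply: eq_bigr => i _; rewrite mxE cvalD mulrDl. Qed.

Lemma S0 : S 0 = 0.
Proof. by rewrite /S big1 // => i _; rewrite mxE cval0 mul0r. Qed.

Lemma Ssum (I : Type) (r : seq I) (Pr : pred I) F :
  S (\sum_(i <- r | Pr i) F i) = \sum_(i <- r | Pr i) S (F i).
Proof. exact: (big_morph S SD S0). Qed.

Lemma SZ c v : S (c *: v) = cval c * S v.
Proof. by rewrite /S mulr_sumr; apply: eq_bigr => i _; rewrite mxE cvalM mulrA. Qed.

Lemma SA v : S (v *m A) = L (S v).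
Proof.
rewrite /S (@Lsum _ _ LD).
under eq_bigr => j _ do rewrite mxE cval_sum mulr_suml.
rewrite exchange_big /=; apply: eq_bigr => i _.
rewrite LZ; last exact: cval_central.
rewrite -(coordK (L (e i))) /S mulr_sumr; apply: eq_bigr => j _.
by rewrite mxE mulrA.
Qed.

Lemma SAk v k : S (v *m A ^+ k) = iter k L (S v).
Proof.
elim: k => [|k IH]; first by rewrite expr0 mulmx1.
by rewrite exprSr -mulmxE mulmxA SA IH.
Qed.

Lemma Shorner v (p : {poly cen K}) :
  S (v *m horner_mx A p) = \sum_(i < size p) cval p`_i * iter i L (S v).
Proof.
rewrite -{1}(coefK p) poly_def rmorph_sum mulmx_sumr Ssum.
apply: eq_bigr => i _.
by rewrite -mul_polyC rmorphM /= horner_mx_C rmorphXn /= horner_mx_X -mulmxE mul_scalar_mx -scalemxAr SZ SAk.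
Qed.

Lemma L_rel x : \sum_(i < size (char_poly A)) cval (char_poly A)`_i * iter i L x = 0.
Proof. by rewrite -(coordK x) -Shorner Cayley_Hamilton mulmx0 S0. Qed.
End CH.

Section Main.
Variable K : unitRingType.
Hypothesis HK : skew_field K.
Variables (P : {poly K}) (a : K).

Definition Lp (b : K) : K := \sum_(i < size P) P`_i * b * a ^+ i.

Lemma LpD x y : Lp (x + y) = Lp x + Lp y.
Proof. by rewrite /Lp -big_split; apply: eq_bigr => i _; rewrite mulrDr mulrDl. Qed.

Lemma LpZ z x : @central K z -> Lp (z * x) = z * Lp x.
Proof.
move=> Hz; rewrite /Lp mulr_sumr; apply: eq_bigr => i _.
by rewrite !mulrA Hz.
Qed.

Lemma Lpcomm b c : c * a = a * c -> Lp (b * c) = Lp b * c.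
Proof.
move=> Hc; rewrite /Lp mulr_suml; apply: eq_bigr => i _.
have Hci : c * a ^+ i = a ^+ i * c by apply: commrX.
by rewrite !mulrA -[_ * c * _]mulrA Hci mulrA.
Qed.

Definition cj (u y : K) := u * y * u^-1.

Lemma cjX u y i : u \is a GRing.unit -> (cj u y) ^+ i = cj u (y ^+ i).
Proof.
move=> U; rewrite /cj; elim: i => [|i IH]; first by rewrite !expr0 mulr1 mulrV.
by rewrite exprS IH !mulrA divrK // exprS !mulrA.
Qed.

Lemma cjcj u v y : u \is a GRing.unit -> v \is a GRing.unit ->
  cj u (cj v y) = cj (u * v) y.
Proof. by move=> U V; rewrite /cj invrM // !mulrA. Qed.

Lemma P_cj b : b \is a GRing.unit -> P.[cj b a] = Lp b * b^-1.
Proof.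
move=> U; rewrite horner_coef /Lp mulr_suml; apply: eq_bigr => i _.
by rewrite cjX // /cj !mulrA.
Qed.

Lemma unit_nz (x : K) : (x \is a GRing.unit) = (x != 0).
Proof.
apply/idP/idP => [U|/HK //]; apply/eqP => x0.
by move: U; rewrite x0 unitr0.
Qed.

End Main.
Arguments Lp {K} P a b.
Arguments cj {K} u y.
Arguments unit_nz {K} HK x.
Arguments P_cj {K} P a b.
Arguments Lpcomm {K} P a b c.
Arguments L0 {K L} LD.
Arguments LN {K L} LD x.

Theorem corollary3p6 (K : unitRingType) (HK : skew_field K)
  (Hfin : findim_over_center K) (P Q : {poly K}) (Hmin : minimal_rep P Q)
  (a : K) :
  defined_at P a <-> (forall c : K, conj_class a c -> P.[c] != 0).
Proof.
split.
  move=> [g Hg] c Hc; apply/negP => /eqP Pc0.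
  have [_ H2] := Hg c Hc; move: H2; rewrite /skew_prod /= Pc0 eqxx /=.
  by move/esym/eqP; rewrite oner_eq0.
move=> Hnz.
set L := Lp P a.
have LD := @LpD K P a; have LZ := @LpZ K P a.
have Linj : forall x, L x = 0 -> x = 0.
  move=> x Hx; case: (eqVneq x 0) => // nx.
  have := Hnz (cj x a) (ex_intro _ x (conj nx erefl)).
  by rewrite P_cj ?(unit_nz HK) // -/L Hx mul0r eqxx.
have Lsurj : forall y, exists x, L x = y.
  case: Hfin => [[|n] [e Hsp]].
    have [z [_ H1]] := Hsp 1; move: H1; rewrite big_ord0 => /eqP.
    by rewrite oner_eq0.
  pose cp := char_poly (@A K n e Hsp L).
  apply: (@surj_of_rel K HK L LD LZ Linj (size cp) (fun k => cval cp`_k)).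
  - by move=> k; apply: cval_central.
  - exists (size cp).-1; split.
      by rewrite prednK ?ltnSn // size_poly_gt0 monic_neq0 // char_poly_monic.
    have := char_poly_monic (@A K n e Hsp L); rewrite -/cp => /monicP.
    by rewrite /lead_coef => ->; rewrite cval1 oner_eq0.
  - by move=> x; apply: L_rel.
have Lbij : forall x y, L x = L y -> x = y.
  move=> x y Hxy; apply/eqP; rewrite -subr_eq0; apply/eqP/Linj.
  by rewrite /L LD (LN LD) -/L Hxy subrr.
have gex : forall z, exists gz, conj_class a z -> exists d b,
    [/\ d != 0, z = cj d a, L b = d & gz = b * d^-1].
  move=> z; case: (classic (conj_class a z)) => [[d [nd Hz]]|nc]; last first.
    by exists 0.
  have [b Hb] := Lsurj d.
  by exists (b * d^-1) => _; exists d, b.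
pose g z := proj1_sig (constructive_indefinite_description _ (gex z)).
have gP z : conj_class a z -> exists d b,
    [/\ d != 0, z = cj d a, L b = d & g z = b * d^-1].
  exact: (proj2_sig (constructive_indefinite_description _ (gex z))).
exists g => z Hz.
have [d [b [nd Ez Hb Hg]]] := gP z Hz.
have Ud : d \is a GRing.unit by apply: HK.
have nb : b != 0 by apply/eqP => b0; move: nd; rewrite -Hb b0 /L (L0 LD) eqxx.
have Ub : b \is a GRing.unit by apply: HK.
split.
  rewrite /skew_prod Hg.
  have -> : (b * d^-1 != 0) by rewrite -(unit_nz HK) unitrMr ?unitrV.
  rewrite Ez -[_ * cj d a * _]/(cj (b / d) (cj d a)) cjcj ?unitrMr ?unitrV // divrK // P_cj // mulrA divrK // -/L Hb.
  by rewrite mulrV.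
have nLd : L d != 0 by apply/eqP => /Linj d0; rewrite d0 eqxx in nd.
have ULd : L d \is a GRing.unit by apply: HK.
rewrite /skew_prod /=.
have fz : P.[z] = L d * d^-1 by rewrite Ez P_cj.
have Ufz : P.[z] \is a GRing.unit by rewrite fz unitrMr ?unitrV.
rewrite (unit_nz HK) in Ufz; rewrite Ufz.
have Ew : P.[z] * z * (P.[z])^-1 = cj (L d) a.
  by rewrite -/(cj _ _) fz Ez cjcj ?unitrMr ?unitrV // divrK.
rewrite Ew.
have [d' [b' [nd' Ew' Hb' Hg']]] :=
  gP (cj (L d) a) (ex_intro _ (L d) (conj nLd erefl)).
have Ud' : d' \is a GRing.unit by apply: HK.
pose c := d'^-1 * L d.
have Hc : c * a = a * c.
  have H := Ew'; move: H; rewrite /cj /c => H.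
  have -> : a * (d'^-1 * L d) = d'^-1 * (d' * a * d'^-1) * L d.
    by rewrite !mulrA mulVr // mul1r.
  by rewrite -H !mulrA divrK.
have Ebc : b' * c = d.
  by apply: Lbij; rewrite /L Lpcomm // -/L Hb' /c mulrA mulrV // mul1r.
by rewrite Hg' fz !mulrA -[b' / d' * L d]mulrA -/c Ebc mulrV.
Qed.
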